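(* Let $G_1$ and $G_2$ be two disjoint $(k+1)$-critical hypergraphs with $k\ge2$, let $\tilde e\in E(G_1)$ and $\tilde v\in V(G_2)$ be arbitrary, and let $s$ be an admissible map for $(\tilde e,G_2,\tilde v)$. Let $G=S(G_1,\tilde e,G_2,\tilde v,s)$ and $G_2'=G[(V(G_2)\setminus\{\tilde v\})\cup\tilde e]$. Assume that for every $k$-coloring $\varphi$ of $G[\tilde e]$ with $|\varphi(\tilde e)|\ge2$ there is a $k$-coloring $\varphi'$ of $G_2'$ whose restriction to $\tilde e$ equals $\varphi$. Then $G$ is $(k+1)$-critical.
   Context: A hypergraph is a pair $G=(V,E)$ of finite sets with $E\subseteq 2^V$ and $|e|\ge2$ for all $e\in E$. A $k$-coloring is a map $V\to\{1,\dots,k\}$ such that every edge contains two vertices of different colors; $\chi$ is the chromatic number. $G$ is $(k+1)$-critical if $\chi(G)=k+1$ but $\chi(H)\le k$ for every proper subhypergraph $H$. $G[X]$ has vertex set $X$ and the edges of $G$ contained in $X$. $\partial_G(v)$ is the set of edges containing $v$. Splitting: let $G_1,G_2$ be disjoint hypergraphs, $\tilde e\in E(G_1)$, $\tilde v\in V(G_2)$, and $s:\partial_{G_2}(\tilde v)\to 2^{\tilde e}$ a map (called admissible) with $s(e)\ne\varnothing$ for all $e$ and $\bigcup_{e}s(e)=\tilde e$. Then $S(G_1,\tilde e,G_2,\tilde v,s)$ is the hypergraph with vertex set $V(G_1)\cup(V(G_2)\setminus\{\tilde v\})$ and edge set $(E(G_1)\setminus\{\tilde e\})\cup(E(G_2)\setminus\partial_{G_2}(\tilde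 v))\cup\{(e\setminus\{\tilde v\})\cup s(e): e\in\partial_{G_2}(\tilde v)\}$. *)

(* Defs.v *)
From mathcomp Require Import all_boot.
Set Implicit Arguments. Unset Strict Implicit. Unset Printing Implicit Defensive.

Record hypergraph (T : finType) := Hypergraph {
  hV : {set T};
  hE : {set {set T}} }.

Section Hyp.
Variable T : finType.

Definition is_hypergraph (G : hypergraph T) : Prop :=
  forall e, e \in hE G -> e \subset hV G /\ 2 <= #|e|.

(* A k-coloring: a map V -> {1..k} (given by a map T -> nat, values outside
   V irrelevant) such that every edge contains two vertices of different
   colours. *)
Definition is_coloring (G : hypergraph T) (k : nat) (phi : T -> nat) : Prop :=
  (forall x, x \in hV G -> 1 <= phi x <= k) /\
  (forall e, e \in hE G -> exists x y, [/\ x \in e, y \in e & phi x != phi y]).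

Definition colorable (G : hypergraph T) (k : nat) : Prop :=
  exists phi, is_coloring G k phi.

Definition is_chromatic_number (G : hypergraph T) (n : nat) : Prop :=
  colorable G n /\ forall m, colorable G m -> n <= m.

Definition subhypergraph (H G : hypergraph T) : Prop :=
  is_hypergraph H /\ hV H \subset hV G /\ hE H \subset hE G.

Definition proper_subhypergraph (H G : hypergraph T) : Prop :=
  subhypergraph H G /\ H <> G.

Definition critical (G : hypergraph T) (k : nat) : Prop :=
  is_hypergraph G /\ is_chromatic_number G k.+1 /\
  forall H, proper_subhypergraph H G ->
    exists m, is_chromatic_number H m /\ m <= k.

Definition induced (G : hypergraph T) (X : {set T}) : hypergraph T :=
  Hypergraph X [set e in hE G | e \subset X].

Definition boundary (G : hypergraph T) (v : T) : {set {set T}} :=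
  [set e in hE G | v \in e].

Definition admissible (et : {set T}) (G2 : hypergraph T) (v : T)
    (s : {set T} -> {set T}) : Prop :=
  (forall e, e \in boundary G2 v -> s e \subset et /\ s e != set0) /\
  \bigcup_(e in boundary G2 v) s e = et.

Definition splitting (G1 : hypergraph T) (et : {set T}) (G2 : hypergraph T)
    (v : T) (s : {set T} -> {set T}) : hypergraph T :=
  Hypergraph (hV G1 :|: (hV G2 :\ v))
    ((hE G1 :\ et) :|: (hE G2 :\: boundary G2 v)
       :|: [set (e :\ v) :|: s e | e in boundary G2 v]).

End Hyp.

(* Main.v *)
Require Import Defs.
From mathcomp Require Import all_boot.
From Stdlib Require Import Classical Lia.
Set Implicit Arguments. Unset Strict Implicit. Unset Printing Implicit Defensive.


Definition delE (T : finType) (G : hypergraph T) f := Hypergraph (hV G) (hE G :\ f).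

Lemma col_mono (T : finType) (G : hypergraph T) m n :
  m <= n -> colorable G m -> colorable G n.
Proof.
move=> le [phi [r e]]; exists phi; split=> // x /r /andP[a b].
by rewrite a (leq_trans b le).
Qed.

Lemma col_sub (T : finType) (G H : hypergraph T) k phi :
  is_coloring G k phi -> hV H \subset hV G -> hE H \subset hE G -> is_coloring H k phi.
Proof.
move=> [r e] sV sE; split=> [x /(subsetP sV)/r | f /(subsetP sE)/e] //.
Qed.

Lemma crit_nocol (T : finType) (G : hypergraph T) k :
  critical G k -> ~ colorable G k.
Proof. by move=> [_ [[_ m] _]] /m; rewrite ltnn. Qed.

Lemma crit_col (T : finType) (G H : hypergraph T) k :
  critical G k -> proper_subhypergraph H G -> colorable H k.
Proof.
by move=> [_ [_ p]] /p [m [[c _] le]]; apply: col_mono c.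
Qed.

Lemma crit_delE (T : finType) (G : hypergraph T) k f :
  critical G k -> f \in hE G -> colorable (delE G f) k.
Proof.
move=> c fE; apply: (crit_col c); split.
  split; last by split=> //=; apply: subD1set.
  case: c => hg _ e /=; rewrite in_setD1 => /andP[_]; exact: hg.
move=> eq; have := congr1 (@hE T) eq => /= /setP /(_ f).
by rewrite in_setD1 eqxx fE.
Qed.

Lemma crit_mono (T : finType) (G : hypergraph T) k f phi x y :
  critical G k -> f \in hE G -> is_coloring (delE G f) k phi ->
  x \in f -> y \in f -> phi x = phi y.
Proof.
move=> c fE [r e] xf yf; case: (eqVneq (phi x) (phi y)) => // ne.
exfalso; apply: (crit_nocol c); exists phi; split=> // g gE.
case: (eqVneq g f) => [->|ng]; first by exists x, y.
by apply: e; rewrite in_setD1 ng.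
Qed.

Lemma crit_noniso (T : finType) (G : hypergraph T) k x :
  0 < k -> critical G k -> x \in hV G -> exists f, f \in hE G /\ x \in f.
Proof.
move=> k0 c xV; case: (boolP [exists f in hE G, x \in f]).
  by move=> /existsP [f /andP[a b]]; exists f.
move=> nex; exfalso.
have nx : forall f, f \in hE G -> x \notin f.
  move=> f fE; apply/negP => xf; move/negP: nex; apply; apply/existsP; exists f.
  by rewrite fE.
have [phi [r e]] : colorable (Hypergraph (hV G :\ x) (hE G)) k.
  apply: (crit_col c); split.
    split; last by split=> //=; apply: subD1set.
    move=> f /= fE; case: c => hg _; have [s2 c2] := hg f fE; split=> //.
    apply/subsetP=> y yf; rewrite in_setD1 (subsetP s2 _ yf) andbT.
    by apply/negP=> /eqP eyx; subst y; move: (nx f fE); rewrite yf.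
  move=> eq; have := congr1 (@hV T) eq => /= /setP /(_ x).
  by rewrite in_setD1 eqxx xV.
apply: (crit_nocol c); exists (fun y => if y == x then 1 else phi y); split.
  move=> y yV; case: eqP => [_|ne]; first by rewrite /= k0.
  by apply: r; rewrite in_setD1 yV andbT; apply/eqP.
move=> f fE; have [a [b [af bf ne]]] := e f fE.
exists a, b; have := nx f fE => nxf.
have -> : (a == x) = false by apply/negP=> /eqP ea; subst a; rewrite af in nxf.
have -> : (b == x) = false by apply/negP=> /eqP eb; subst b; rewrite bf in nxf.
by [].
Qed.

Lemma crit_anti (T : finType) (G : hypergraph T) k f g :
  critical G k -> f \in hE G -> g \in hE G -> f \subset g -> f = g.
Proof.
move=> c fE gE fg; case: (eqVneq f g) => // ne; exfalso.
have [phi [r e]] := crit_delE c gE.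
have [x [y [xf yf nxy]]] := e f (etrans (in_setD1 _ _ _) (introT andP (conj ne fE))).
apply: (crit_nocol c); exists phi; split=> // h hE.
case: (eqVneq h g) => [->|nh]; last by apply: e; rewrite in_setD1 nh.
by exists x, y; rewrite !(subsetP fg).
Qed.

Lemma exists_chi (T : finType) (H : hypergraph T) n :
  colorable H n -> exists m, is_chromatic_number H m /\ m <= n.
Proof.
elim/ltn_ind: n => n IH cn.
case: (classic (exists m, m < n /\ colorable H m)) => [[m [lt cm]] | nex].
  have [m' [ch le]] := IH m lt cm.
  by exists m'; split=> //; apply: leq_trans le (ltnW lt).
exists n; split=> //; split=> // m cm; rewrite leqNgt; apply/negP => lt.
by apply: nex; exists m.
Qed.

Lemma two_colors (T : finType) (A : {set T}) (phi : T -> nat) x y :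
  x \in A -> y \in A -> phi x != phi y ->
  2 <= size (undup [seq phi z | z <- enum A]).
Proof.
move=> xA yA ne.
have -> : 2 = size [:: phi x; phi y] by [].
apply: uniq_leq_size; first by rewrite /= inE ne.
move=> c; rewrite !inE => /orP[] /eqP ->; rewrite mem_undup; apply: map_f;
  by rewrite mem_enum.
Qed.

Lemma other_elt (T : finType) (A : {set T}) x :
  2 <= #|A| -> exists y, y \in A /\ y != x.
Proof.
rewrite (cardsD1 x) => h.
have : 0 < #|A :\ x| by case: (x \in A) h => //= h; apply: leq_trans h.
rewrite card_gt0 => /set0Pn [y]; rewrite in_setD1 => /andP[a b]; by exists y.
Qed.

Lemma splitE (T : finType) (G1 G2 : hypergraph T) et v s g :
  g \in hE (splitting G1 et G2 v s) ->
  [\/ g \in hE G1 /\ g != et, g \in hE G2 /\ v \notin g |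
      exists2 e, e \in boundary G2 v & g = (e :\ v) :|: s e].
Proof.
rewrite /= !inE => /orP[/orP[/andP[a b]|/andP[a b]]|/imsetP[e eB ->]].
- by constructor 1.
- by constructor 2; split=> //; move: a; rewrite b.
- by constructor 3; exists e.
Qed.

Lemma splitI1 (T : finType) (G1 G2 : hypergraph T) et v s g :
  g \in hE G1 -> g != et -> g \in hE (splitting G1 et G2 v s).
Proof. by move=> a b; rewrite /= !inE a b. Qed.

Lemma splitI2 (T : finType) (G1 G2 : hypergraph T) et v s g :
  g \in hE G2 -> v \notin g -> g \in hE (splitting G1 et G2 v s).
Proof. by move=> a b; rewrite /= !inE a (negbTE b) /= orbT. Qed.

Lemma splitI3 (T : finType) (G1 G2 : hypergraph T) et v s e :
  e \in boundary G2 v -> (e :\ v) :|: s e \in hE (splitting G1 et G2 v s).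
Proof. by move=> eB; rewrite /= in_setU; apply/orP; right; apply/imsetP; exists e. Qed.
Definition sw (c0 c n : nat) := if n == c0 then c else if n == c then c0 else n.
Lemma sw_inj c0 c a b : sw c0 c a = sw c0 c b -> a = b.
Proof. rewrite /sw; repeat case: eqP; intros; lia. Qed.
Lemma sw_range c0 c k n : 1 <= c0 <= k -> 1 <= c <= k -> 1 <= n <= k -> 1 <= sw c0 c n <= k.
Proof. by rewrite /sw; repeat case: eqP. Qed.

Lemma nonempty (T : finType) (A : {set T}) : 2 <= #|A| -> exists x, x \in A.
Proof.
move=> h; have /set0Pn [x xA] : A != set0 by rewrite -card_gt0; apply: leq_trans h.
by exists x.
Qed.

Lemma split_nocol (T : finType) (k : nat) (G1 G2 : hypergraph T) et v s :
  hV G1 :&: hV G2 = set0 -> critical G1 k -> critical G2 k ->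
  et \in hE G1 -> v \in hV G2 -> admissible et G2 v s ->
  ~ colorable (splitting G1 et G2 v s) k.
Proof.
move=> disj c1 c2 etE vV [adm1 adm2] [phi [r e]].
have [hg1 _] := c1; have [etV1 et2] := hg1 et etE.
have col1 : is_coloring (delE G1 et) k phi.
  split=> [x xV | g]; first by apply: r; rewrite /= in_setU xV.
  rewrite in_setD1 => /andP[ne gE]; apply: e; exact: splitI1.
have mono := crit_mono c1 etE col1.
have [x0 x0et] := nonempty et2.
apply: (crit_nocol c2); exists (fun y => if y == v then phi x0 else phi y); split.
  move=> y yV; case: eqP => [_|ne].
    by apply: r; rewrite /= in_setU (subsetP etV1 _ x0et).
  by apply: r; rewrite /= in_setU in_setD1 yV andbT; apply/orP; right; apply/eqP.
move=> g gE; case vg: (v \in g).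
  have gB : g \in boundary G2 v by rewrite inE gE vg.
  have [a [b [ai bi ne]]] := e _ (splitI3 G1 et s gB).
  pose z := fun a => if a \in s g then v else a.
  have cl : forall a, a \in g :\ v :|: s g ->
      z a \in g /\ (if z a == v then phi x0 else phi (z a)) = phi a.
    move=> a'; rewrite in_setU in_setD1 /z => H.
    case: (boolP (a' \in s g)) => sa.
      split=> //; rewrite eqxx; apply: mono => //.
      exact: (subsetP (adm1 g gB).1).
    by move: H; rewrite (negbTE sa) orbF => /andP[av ag]; rewrite (negbTE av).
  have [za1 za2] := cl a ai; have [zb1 zb2] := cl b bi.
  by exists (z a), (z b); rewrite za2 zb2.
have [a [b [ai bi ne]]] := e g (splitI2 G1 et s gE (negbT vg)).
exists a, b.
have -> : (a == v) = false by apply/negP => /eqP ea; subst a; rewrite ai in vg.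
have -> : (b == v) = false by apply/negP => /eqP eb; subst b; rewrite bi in vg.
by [].
Qed.

Lemma dis (T : finType) (A B : {set T}) x : A :&: B = set0 -> x \in A -> x \in B -> False.
Proof. by move=> d xa xb; have := in_set0 x; rewrite -d in_setI xa xb. Qed.

Lemma split_C1 (T : finType) (k : nat) (G1 G2 : hypergraph T) et v s f :
  hV G1 :&: hV G2 = set0 -> critical G1 k -> critical G2 k ->
  et \in hE G1 -> v \in hV G2 -> admissible et G2 v s ->
  (forall phi : T -> nat,
     is_coloring (induced (splitting G1 et G2 v s) et) k phi ->
     2 <= size (undup [seq phi x | x <- enum et]) ->
     exists phi' : T -> nat,
       is_coloring (induced (splitting G1 et G2 v s) ((hV G2 :\ v) :|: et)) k phi'
       /\ forall x, x \in et -> phi' x = phi x) ->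
  f \in hE G1 -> f != et -> colorable (delE (splitting G1 et G2 v s) f) k.
Proof.
move=> disj c1 c2 etE vV [adm1 adm2] hyp fE fne.
have [hg1 _] := c1; have [hg2 _] := c2; have [etV1 et2] := hg1 et etE.
have [phi1 [r1 e1]] := crit_delE c1 fE.
have [x [y [xe ye nxy]]] : exists x y, [/\ x \in et, y \in et & phi1 x != phi1 y].
  by apply: e1; rewrite in_setD1 etE andbT eq_sym.
have noin : forall g, g \in hE (splitting G1 et G2 v s) -> g \subset et -> False.
  move=> g /splitE [[gE gne]|[gE vg]|[e eB ->]] sub.
  - by move: gne; rewrite (crit_anti c1 gE etE sub) eqxx.
  - have [gV g2] := hg2 g gE; have [z zg] := nonempty g2.
    exact: (dis disj (subsetP etV1 _ (subsetP sub _ zg)) (subsetP gV _ zg)).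
  - move: eB; rewrite inE => /andP[eE ve]; have [eV e2] := hg2 e eE.
    have [z [ze zv]] := other_elt v e2.
    have zg : z \in e :\ v :|: s e by rewrite in_setU in_setD1 zv ze.
    exact: (dis disj (subsetP etV1 _ (subsetP sub _ zg)) (subsetP eV _ ze)).
have colet : is_coloring (induced (splitting G1 et G2 v s) et) k phi1.
  split=> [z /= zet | g]; first by apply: r1; exact: (subsetP etV1).
  by rewrite /= inE => /andP[gE sub]; case: (noin g gE sub).
have [phi' [[r' e'] agree]] := hyp phi1 colet (two_colors xe ye nxy).
exists (fun z => if z \in hV G1 then phi1 z else phi' z).
have psi_eq : forall z, z \in (hV G2 :\ v) :|: et ->
    (if z \in hV G1 then phi1 z else phi' z) = phi' z.
  move=> z; rewrite in_setU in_setD1 => /orP[/andP[_ z2]|zet].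
    by case: ifP => // z1; case: (dis disj z1 z2).
  by rewrite (subsetP etV1 _ zet) agree.
split.
  move=> z /=; rewrite in_setU; case: ifP => z1 /=; first by move=> _; apply: r1.
  by move=> zz; apply: r'; rewrite /= in_setU zz.
move=> g /=; rewrite in_setD1 => /andP[gnf gE].
have gen : g \subset (hV G2 :\ v) :|: et ->
    exists x0 y0, [/\ x0 \in g, y0 \in g &
     (if x0 \in hV G1 then phi1 x0 else phi' x0) !=
     (if y0 \in hV G1 then phi1 y0 else phi' y0)].
  move=> sub; have [a [b [ag bg nab]]] : exists a b, [/\ a \in g, b \in g & phi' a != phi' b].
    by apply: e'; rewrite /= inE gE sub.
  by exists a, b; rewrite !psi_eq // (subsetP sub).
move: (gE) => /splitE [[g1 gne]|[g2 vg]|[e eB ge]].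
- have [a [b [ag bg nab]]] : exists a b, [/\ a \in g, b \in g & phi1 a != phi1 b].
    by apply: e1; rewrite in_setD1 gnf.
  have [gV _] := hg1 g g1.
  by exists a, b; rewrite !(subsetP gV).
- apply: gen; apply/subsetP => z zg; rewrite in_setU in_setD1.
  have [gV _] := hg2 g g2; rewrite (subsetP gV _ zg) andbT.
  by apply/orP; left; apply/eqP => ezv; subst z; rewrite zg in vg.
- apply: gen; rewrite ge; apply/subsetP => z; rewrite !in_setU !in_setD1.
  move: (eB); rewrite inE => /andP[eE ve]; have [eV _] := hg2 e eE.
  move=> /orP[/andP[zv ze]|zs]; first by rewrite zv (subsetP eV _ ze).
  by rewrite (subsetP (adm1 e eB).1 _ zs) orbT.
Qed.

Lemma split_C2 (T : finType) (k : nat) (G1 G2 : hypergraph T) et v s f h :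
  hV G1 :&: hV G2 = set0 -> critical G1 k -> critical G2 k ->
  et \in hE G1 -> v \in hV G2 -> admissible et G2 v s ->
  h \in hE G2 ->
  (forall g, g \in hE G2 -> v \notin g -> g != f -> g != h) ->
  (forall e, e \in boundary G2 v -> (e :\ v) :|: s e != f -> e != h) ->
  colorable (delE (splitting G1 et G2 v s) f) k.
Proof.
move=> disj c1 c2 etE vV [adm1 adm2] hE2 H1 H2.
have [hg1 _] := c1; have [hg2 _] := c2; have [etV1 et2] := hg1 et etE.
have [phi2 [r2 e2]] := crit_delE c2 hE2.
have [phi1 [r1 e1]] := crit_delE c1 etE.
have mono := crit_mono c1 etE (conj r1 e1).
have [x0 x0et] := nonempty et2.
pose c := phi2 v; pose c0 := phi1 x0.
have cr : 1 <= c <= k by apply: r2.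
have c0r : 1 <= c0 <= k by apply: r1; exact: (subsetP etV1).
pose psi := fun z => if z \in hV G1 then sw c0 c (phi1 z) else phi2 z.
have psi_et : forall w, w \in et -> psi w = c.
  by move=> w we; rewrite /psi (subsetP etV1 _ we) (mono w x0) // /sw /c0 eqxx.
have psi2 : forall z, z \in hV G2 -> psi z = phi2 z.
  by move=> z z2; rewrite /psi; case: ifP => // z1; case: (dis disj z1 z2).
exists psi; split.
  move=> z /=; rewrite in_setU /psi; case: ifP => z1 /=.
    by move=> _; apply: sw_range => //; apply: r1.
  by rewrite in_setD1 => /andP[_ z2]; apply: r2.
move=> g /=; rewrite in_setD1 => /andP[gnf gE].
move: (gE) => /splitE [[g1 gne]|[g2 vg]|[e eB ge]].
- have [a [b [ag bg nab]]] : exists a b, [/\ a \in g, b \in g & phi1 a != phi1 b].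
    by apply: e1; rewrite in_setD1 gne.
  have [gV _] := hg1 g g1.
  exists a, b; rewrite /psi !(subsetP gV) //; split=> //.
  by apply: contra nab => /eqP /sw_inj ->.
- have [a [b [ag bg nab]]] : exists a b, [/\ a \in g, b \in g & phi2 a != phi2 b].
    by apply: e2; rewrite in_setD1 g2 andbT; apply: H1.
  have [gV _] := hg2 g g2.
  by exists a, b; rewrite !psi2 // (subsetP gV).
- have ne : e != h by apply: H2; rewrite -?ge.
  move: (eB); rewrite inE => /andP[eE ve]; have [eV _] := hg2 e eE.
  have [a [b [ae be nab]]] : exists a b, [/\ a \in e, b \in e & phi2 a != phi2 b].
    by apply: e2; rewrite in_setD1 ne.
  have /set0Pn [w ws] := (adm1 e eB).2.
  pose zz := fun a => if a == v then w else a.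
  have cl : forall a, a \in e -> zz a \in g /\ psi (zz a) = phi2 a.
    move=> a' a'e; rewrite /zz ge; case: eqP => [->|nv].
      by rewrite in_setU ws orbT psi_et // (subsetP (adm1 e eB).1).
    rewrite in_setU in_setD1 a'e psi2 ?(subsetP eV) //; split=> //; apply/orP; left; by rewrite andbT; apply/eqP.
  have [za1 za2] := cl a ae; have [zb1 zb2] := cl b be.
  by exists (zz a), (zz b); rewrite za2 zb2.
Qed.

Lemma colS (T : finType) (G : hypergraph T) k f :
  is_hypergraph G -> f \in hE G -> colorable (delE G f) k -> colorable G k.+1.
Proof.
move=> hg fE [phi [r e]].
have [fV f2] := hg f fE; have [x xf] := nonempty f2.
exists (fun y => if y == x then k.+1 else phi y); split.
  move=> y yV; case: eqP => _; first by rewrite leqnn.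
  have /andP[a b] := r y yV.
  by rewrite a (leq_trans b).
move=> g gE; have [gV g2] := hg g gE.
case xg: (x \in g).
  have [y [yg yx]] := other_elt x g2.
  exists x, y; rewrite eqxx (negbTE yx); split=> //.
  have /andP[_ b] := r y (subsetP gV _ yg).
  by rewrite eq_sym; apply: contraTneq b => ->; rewrite ltnn.
have [a [b [ag bg nab]]] : exists a b, [/\ a \in g, b \in g & phi a != phi b].
  apply: e; rewrite /= in_setD1 gE andbT; apply/eqP => gf; subst g; by rewrite xf in xg.
exists a, b.
have -> : (a == x) = false by apply/negP => /eqP ea; subst a; rewrite ag in xg.
have -> : (b == x) = false by apply/negP => /eqP eb; subst b; rewrite bg in xg.
by [].
Qed.

Theorem theorem17 (T : finType) (k : nat) (G1 G2 : hypergraph T)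
    (et : {set T}) (v : T) (s : {set T} -> {set T}) :
  2 <= k ->
  hV G1 :&: hV G2 = set0 ->
  critical G1 k ->
  critical G2 k ->
  et \in hE G1 ->
  v \in hV G2 ->
  admissible et G2 v s ->
  (forall phi : T -> nat,
     is_coloring (induced (splitting G1 et G2 v s) et) k phi ->
     2 <= size (undup [seq phi x | x <- enum et]) ->
     exists phi' : T -> nat,
       is_coloring (induced (splitting G1 et G2 v s) ((hV G2 :\ v) :|: et)) k phi'
       /\ forall x, x \in et -> phi' x = phi x) ->
  critical (splitting G1 et G2 v s) k.
Proof.
move=> k2 disj c1 c2 etE vV adm hyp.
have [adm1 adm2] := adm.
have [hg1 _] := c1; have [hg2 _] := c2; have [etV1 et2] := hg1 et etE.
have k0 : 0 < k by apply: leq_trans k2.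
have hg : is_hypergraph (splitting G1 et G2 v s).
  move=> g /splitE [[gE _]|[gE vg]|[e eB ->]].
  - have [gV g2] := hg1 g gE; split=> //.
    by apply: subset_trans gV _; apply: subsetUl.
  - have [gV g2] := hg2 g gE; split=> //.
    apply/subsetP => z zg; rewrite /= in_setU in_setD1 (subsetP gV _ zg) andbT.
    by apply/orP; right; apply/eqP => ezv; subst z; rewrite zg in vg.
  - move: (eB); rewrite inE => /andP[eE ve]; have [eV e2] := hg2 e eE.
    split.
      apply/subsetP => z; rewrite /= !in_setU !in_setD1 => /orP[/andP[zv ze]|zs].
        by rewrite zv (subsetP eV _ ze) orbT.
      by rewrite (subsetP etV1 _ (subsetP (adm1 e eB).1 _ zs)).
    have [y [ye yv]] := other_elt v e2.
    have /set0Pn [w ws] := (adm1 e eB).2.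
    have nyw : y != w.
      apply/eqP => eyw; subst w.
      exact: (dis disj (subsetP etV1 _ (subsetP (adm1 e eB).1 _ ws)) (subsetP eV _ ye)).
    apply: (@leq_trans #|[set y; w]|); first by rewrite cards2 nyw.
    apply: subset_leq_card; apply/subsetP => z.
    rewrite !inE => /orP[] /eqP ->; first by rewrite ye yv.
    by rewrite ws orbT.
have noncol := split_nocol disj c1 c2 etE vV adm.
have C : forall f, f \in hE (splitting G1 et G2 v s) ->
    colorable (delE (splitting G1 et G2 v s) f) k.
  move=> f /splitE [[fE fne]|[fE vf]|[e0 e0B ->]].
  - exact: (split_C1 disj c1 c2 etE vV adm hyp fE fne).
  - apply: (split_C2 (h := f) disj c1 c2 etE vV adm fE) => // e eB _.
    apply/eqP => ef; subst e; move: eB; rewrite inE => /andP[_ vf'].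
    by rewrite vf' in vf.
  - move: (e0B); rewrite inE => /andP[e0E ve0].
    apply: (split_C2 (h := e0) disj c1 c2 etE vV adm e0E).
      by move=> g _ vg _; apply/eqP => ge; subst g; rewrite ve0 in vg.
    by move=> e _ ne; apply/eqP => ee; subst e; rewrite eqxx in ne.
have [x0 x0et] := nonempty et2.
have [e0 e0B x0s] : exists2 e, e \in boundary G2 v & x0 \in s e.
  by move: x0et; rewrite -adm2 => /bigcupP [e eB xs]; exists e.
have f0E := splitI3 G1 et s e0B.
split=> //; split.
  split; first exact: colS hg f0E (C _ f0E).
  move=> m cm; rewrite ltnNge; apply/negP => le; apply: noncol.
  exact: col_mono le cm.
move=> H [[hgH [sV sE]] neq].
suff: colorable H k by move=> /exists_chi.
case: (boolP (hE (splitting G1 et G2 v s) \subset hE H)) => sub.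
  have eE : hE H = hE (splitting G1 et G2 v s) by apply/eqP; rewrite eqEsubset sE sub.
  case: (boolP (hV (splitting G1 et G2 v s) \subset hV H)) => subV.
    have eV : hV H = hV (splitting G1 et G2 v s) by apply/eqP; rewrite eqEsubset sV subV.
    by exfalso; apply: neq; move: eE eV; case: H {hgH sV sE sub subV} => ? ? /= -> ->.
  have [x xG xH] := subsetPn subV.
  exfalso.
  have [f [fE xf]] : exists f, f \in hE (splitting G1 et G2 v s) /\ x \in f.
    move: xG; rewrite /= in_setU in_setD1 => /orP[x1|/andP[xv x2]].
      have [f [fE xf]] := crit_noniso k0 c1 x1.
      case: (eqVneq f et) => [fet|fne]; last by exists f; split=> //; apply: splitI1.
      subst f; move: xf; rewrite -adm2 => /bigcupP [e eB xs].
      by exists ((e :\ v) :|: s e); rewrite splitI3 // in_setU xs orbT.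
    have [f [fE xf]] := crit_noniso k0 c2 x2.
    case vf: (v \in f); last by exists f; rewrite splitI2 // vf.
    have fB : f \in boundary G2 v by rewrite inE fE vf.
    by exists ((f :\ v) :|: s f); rewrite splitI3 // in_setU in_setD1 xv xf.
  rewrite -eE in fE; have [fV _] := hgH f fE.
  by rewrite (subsetP fV _ xf) in xH.
have [f fE fH] := subsetPn sub.
have [phi cphi] := C f fE.
exists phi; apply: (col_sub cphi) => //.
apply/subsetP => g gH; rewrite /= in_setD1 (subsetP sE _ gH) andbT.
by apply/eqP => gf; subst g; rewrite gH in fH.
Qed.
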